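(* The following hold: (1) every reduced ring is NCSUC; (2) every local ring is NCSUC; (3) if $R$ is a domain, then the upper triangular matrix ring $\mathrm{T}_2(R)$ is NCSUC; (4) for any nonzero ring $R$, the matrix ring $\mathrm{M}_2(R)$ is not NCSUC.
   Context: All rings are associative with identity $1$. For a ring $R$, $\mathrm{Id}(R)$, $U(R)$, $\mathrm{Nil}(R)$ denote the sets of idempotents, units and nilpotent elements. An element $a\in R$ is nil-clean if $a=e+q$ with $e\in \mathrm{Id}(R)$, $q\in\mathrm{Nil}(R)$. An element $a$ is uniquely strongly clean if there is exactly one $e\in\mathrm{Id}(R)$ such that $a-e\in U(R)$ and $ae=ea$. A ring is NCSUC if every nil-clean element is uniquely strongly clean. A ring is reduced if it has no nonzero nilpotent elements; a domain is a nonzero ring without zero divisors; $\mathrm{T}_2(R)$ is the ring of $2\times 2$ upper triangular matrices over $R$. *)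

(* Defs.v *)
From HB Require Import structures.
From mathcomp Require Import all_boot all_order all_algebra.
Set Implicit Arguments. Unset Strict Implicit. Unset Printing Implicit Defensive.
Import GRing.Theory.
Local Open Scope ring_scope.

Definition is_idem (R : pzRingType) (x : R) : Prop := x * x = x.
Definition is_nilp (R : pzRingType) (x : R) : Prop := exists n : nat, x ^+ n = 0.
Definition is_unit (R : pzRingType) (x : R) : Prop :=
  exists y : R, x * y = 1 /\ y * x = 1.

Definition nil_clean (R : pzRingType) (a : R) : Prop :=
  exists e q : R, is_idem e /\ is_nilp q /\ a = e + q.

Definition uniquely_strongly_clean (R : pzRingType) (a : R) : Prop :=
  exists! e : R, is_idem e /\ is_unit (a - e) /\ a * e = e * a.

Definition NCSUC (R : pzRingType) : Prop :=
  forall a : R, nil_clean a -> uniquely_strongly_clean a.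

Definition reduced (R : pzRingType) : Prop :=
  forall x : R, is_nilp x -> x = 0.

Definition domain (R : pzRingType) : Prop :=
  (1 : R) <> 0 /\ forall a b : R, a * b = 0 -> a = 0 \/ b = 0.

Definition left_ideal (R : pzRingType) (I : R -> Prop) : Prop :=
  [/\ I 0, (forall x y, I x -> I y -> I (x - y)) & (forall r x, I x -> I (r * x))].

Definition maximal_left_ideal (R : pzRingType) (I : R -> Prop) : Prop :=
  [/\ left_ideal I, ~ I 1 &
      forall J : R -> Prop, left_ideal J -> ~ J 1 ->
        (forall x, I x -> J x) -> forall x, J x -> I x].

Definition local_ring (R : pzRingType) : Prop :=
  exists I : R -> Prop, maximal_left_ideal I /\
    forall J : R -> Prop, maximal_left_ideal J -> forall x, J x <-> I x.

Section T2.
Variable R : nzRingType.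

Definition uptri : {pred 'M[R]_2} := fun A => A ord_max ord0 == 0.

Lemma uptri_subring_closed : subring_closed uptri.
Proof.
split.
- by rewrite /uptri unfold_in /= mxE.
- move=> A B; rewrite /uptri !unfold_in /= mxE !mxE => /eqP-> /eqP->.
  by rewrite subr0.
- move=> A B; rewrite /uptri !unfold_in /= !mxE => /eqP HA /eqP HB.
  rewrite !big_ord_recr big_ord0 /= add0r.
  have -> : (widen_ord (leqnSn 1) ord_max : 'I_2) = ord0 by apply/val_inj.
  by rewrite HA HB mul0r mulr0 addr0.
Qed.

HB.instance Definition _ := GRing.isSubringClosed.Build _ uptri
  uptri_subring_closed.

Definition T2 := {A : 'M[R]_2 | A \in uptri}.
HB.instance Definition _ := [isSub for (@proj1_sig _ _ : T2 -> 'M[R]_2)].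
HB.instance Definition _ := [Choice of T2 by <:].
HB.instance Definition _ := [SubChoice_isSubNzRing of T2 by <:].
End T2.

(* Main.v *)
Require Import Defs.
From HB Require Import structures.
From mathcomp Require Import all_boot all_order all_algebra.
From mathcomp Require Import boolp classical_sets.
Local Open Scope ring_scope.
Import GRing.Theory.
Set Implicit Arguments. Unset Strict Implicit.

Section Gen.
Variable R : pzRingType.
Implicit Types x y e f q : R.

Lemma unit_cancel x w : is_unit x -> x * w = 0 -> w = 0.
Proof.
move=> [g [_ Hg]] H; by rewrite -[w]mul1r -Hg -mulrA H mulr0.
Qed.

Lemma nilp_unit_triv q : is_nilp q -> is_unit q -> (1 : R) = 0.
Proof.
move=> [n Hn] [g [Hg _]].
have H : forall k, q ^+ k * g ^+ k = 1.
  elim=> [|k IH]; first by rewrite !expr0 mulr1.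
  by rewrite exprSr exprS -mulrA (mulrA q) Hg mul1r IH.
by rewrite -(H n) Hn mul0r.
Qed.

Lemma nilp_subr1 q : is_nilp q -> is_unit (q - 1).
Proof.
move=> [n Hn]; have E := subrX1 q n; rewrite Hn sub0r in E.
exists (- \sum_(i < n) q ^+ i); split.
  by rewrite mulrN -E opprK.
have C : GRing.comm (q - 1) (\sum_(i < n) q ^+ i).
  apply: commr_sum => i _; apply: commrX; apply/commr_sym; apply: commrB; [exact: commr_refl|exact: commr1].
by rewrite mulNr -C -E opprK.
Qed.

Lemma unit_neg x : is_unit x -> is_unit (- x).
Proof. by move=> [g [H1 H2]]; exists (- g); rewrite !mulrNN. Qed.

Lemma nilp_neg q : is_nilp q -> is_nilp (- q).
Proof. by move=> [n Hn]; exists n; rewrite exprNn Hn mulr0. Qed.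

Lemma nilp_addr1 q : is_nilp q -> is_unit (1 + q).
Proof.
move=> /nilp_neg /nilp_subr1 /unit_neg; by rewrite opprB opprK.
Qed.

Lemma idemC e : is_idem e -> is_idem (1 - e).
Proof.
rewrite /is_idem => He; by rewrite mulrBl mul1r mulrBr mulr1 He subrr subr0.
Qed.

Lemma idem_orth e : is_idem e -> e * (1 - e) = 0 /\ (1 - e) * e = 0.
Proof.
rewrite /is_idem => He; by rewrite mulrBr mulrBl mulr1 mul1r He subrr.
Qed.

Lemma idem_comm_unit e f : is_idem e -> is_idem f -> e * f = f * e ->
  is_unit (e - f) -> f = 1 - e.
Proof.
rewrite /is_idem => He Hf C U.
have Hef : e * f = 0.
  apply: (unit_cancel U).
  by rewrite mulrBl mulrA He (mulrA f) -C -mulrA Hf subrr.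
have H1 : (e - f) * (1 - e) = - f.
  by rewrite mulrBr mulr1 mulrBl He -C Hef subr0 addrAC subrr add0r.
have H2 : (e - f) * ((1 - e) * (1 - f)) = 0.
  by rewrite mulrA H1 mulNr mulrBr mulr1 Hf subrr oppr0.
have H3 := unit_cancel U H2.
move: H3; rewrite mulrBr mulr1 mulrBl mul1r Hef subr0.
move/eqP; rewrite subr_eq0 => /eqP ->.
done.
Qed.

Lemma reduced_NCSUC : reduced R -> NCSUC R.
Proof.
rewrite /NCSUC /nil_clean /uniquely_strongly_clean => Hred a [e [q [He [Hq ->]]]]; rewrite (Hred q Hq) addr0.
exists (1 - e); split; last first.
  by move=> f [Hf [U C]]; symmetry; apply: idem_comm_unit.
split; first exact: idemC.
have [O1 O2] := idem_orth He.
split; last by rewrite O1 O2.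
exists (e - (1 - e)); split;
  rewrite mulrBl (mulrBr e) (mulrBr (1 - e)) O1 O2 He (idemC He) subr0 sub0r opprK addrC subrK //.
Qed.

End Gen.

Section Loc.
Variable R : pzRingType.

Lemma proper_in_max (J0 : R -> Prop) : left_ideal J0 -> ~ J0 1 ->
  exists M, maximal_left_ideal M /\ forall x, J0 x -> M x.
Proof.
move=> [J00 J0B J0M] J01.
pose P := fun X : set R => [/\ (forall x y, X x -> X y -> X (x - y)),
   (forall r x, X x -> X (r * x)), ~ X 1 &
   ((exists x, X x) -> forall x, J0 x -> X x)].
have PJ0 : P J0 by split.
have [A [[AB AM A1 AJ] Amax]] : exists A, P A /\ forall B, (A `<` B)%classic -> ~ P B.
  apply: Zorn_bigcup => F FP Ftot; split.
  - move=> x y [X FX Xx] [Y FY Yy].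
    have [XY|YX] := Ftot X Y FX FY.
      by exists Y => //; have [YB _ _ _] := FP Y FY; apply: YB => //; apply: XY.
    by exists X => //; have [XB _ _ _] := FP X FX; apply: XB => //; apply: YX.
  - move=> r x [X FX Xx]; exists X => //; have [_ XM _ _] := FP X FX; exact: XM.
  - by move=> [X FX X1]; have [_ _ nX1 _] := FP X FX; exact: nX1.
  - move=> [x [X FX Xx]] y Jy; exists X => //.
    have [_ _ _ XJ] := FP X FX; apply: XJ => //; by exists x.
have Ane : exists x, A x.
  apply: contrapT => Ae; apply: (Amax J0) => //; split.
    by move=> x Ax; exfalso; apply: Ae; exists x.
  move=> sub; apply: Ae; exists 0; exact: sub.
have AJ0 := AJ Ane.
have A0 : A 0 by have [x Ax] := Ane; rewrite -(subrr x); apply: AB.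
exists A; split => //; split => //.
move=> J [J0' JB JM] J1 AJ' x Jx; apply: contrapT => nAx.
apply: (Amax J).
  split => // sub; exact: nAx (sub x Jx).
split => // _ y Jy; exact: AJ' y (AJ0 y Jy).
Qed.

Lemma local_idem (e : R) : local_ring R -> is_idem e -> e = 0 \/ e = 1.
Proof.
move=> [I [HI Iu]] He; rewrite /is_idem in He.
have [[I0 IB IM] I1 _] := HI.
have inI : forall J : R -> Prop, left_ideal J -> ~ J 1 -> forall x, J x -> I x.
  move=> J HJ J1 x Jx; have [M [HM JM]] := proper_in_max HJ J1.
  by apply/(Iu M HM); apply: JM.
have idl : forall c : R, left_ideal (fun x => exists r, x = r * c).
  move=> c; split.
  - by exists 0; rewrite mul0r.
  - by move=> x y [r ->] [s ->]; exists (r - s); rewrite mulrBl.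
  - by move=> r x [s ->]; exists (r * s); rewrite mulrA.
have [e0|e0] := eqVneq e 0; first by left.
have [e1|e1] := eqVneq e 1; first by right.
exfalso.
have Ie : I e.
  apply: (inI _ (idl e)); last by exists 1; rewrite mul1r.
  move=> [r Hr]; move/eqP: e1; apply.
  have : e = r * e * e by rewrite -Hr mul1r.
  by rewrite -mulrA He -Hr.
have Ie' : I (1 - e).
  apply: (inI _ (idl (1 - e))); last by exists 1; rewrite mul1r.
  move=> [r Hr]; move/eqP: e0; apply.
  have : e = r * (1 - e) * e by rewrite -Hr mul1r.
  by rewrite -mulrA (_ : (1 - e) * e = 0) ?mulr0 // mulrBl mul1r He subrr.
apply: I1.
have -> : (1 : R) = (1 - e) - (0 - e) by rewrite sub0r opprK subrK.
by apply: (IB) => //; apply: (IB).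
Qed.


Lemma local_NCSUC : local_ring R -> NCSUC R.
Proof.
move=> HL; rewrite /NCSUC /nil_clean /uniquely_strongly_clean.
move=> a [e [q [He [Hq ->]]]].
have [->|->] := local_idem HL He.
- exists 1; split.
    split; first by rewrite /is_idem mulr1.
    by rewrite add0r; split; [exact: nilp_subr1 | rewrite mulr1 mul1r].
  move=> f [Hf [U _]]; have [f0|->//] := local_idem HL Hf.
  move: U; rewrite f0 subr0 add0r => U.
  by rewrite (nilp_unit_triv Hq U).
- exists 0; split.
    split; first by rewrite /is_idem mulr0.
    by rewrite subr0; split; [exact: nilp_addr1 | rewrite mulr0 mul0r].
  move=> f [Hf [U _]]; have [->//|f1] := local_idem HL Hf.
  move: U; rewrite f1 (addrC 1 q) addrK => U.
  by rewrite (nilp_unit_triv Hq U).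
Qed.

End Loc.

Section Mat.
Variable R : nzRingType.
Notation i0 := (ord0 : 'I_2).
Notation i1 := (ord_max : 'I_2).

Lemma I2_cases (i : 'I_2) : i = i0 \/ i = i1.
Proof. case: i => [[|[|//]]] Hi; [left|right]; exact: val_inj. Qed.

Lemma mul2E (A B : 'M[R]_2) i j : (A * B) i j = A i i0 * B i0 j + A i i1 * B i1 j.
Proof.
rewrite mxE big_ord_recl big_ord_recl big_ord0 addr0.
by have -> : lift ord0 (ord0 : 'I_1) = i1 by apply: val_inj.
Qed.

Lemma mx2_eq (A B : 'M[R]_2) : A i0 i0 = B i0 i0 -> A i0 i1 = B i0 i1 ->
  A i1 i0 = B i1 i0 -> A i1 i1 = B i1 i1 -> A = B.
Proof.
move=> H1 H2 H3 H4; apply/matrixP => i j.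
by case: (I2_cases i) => ->; case: (I2_cases j) => ->.
Qed.

Definition t00 (x : T2 R) := val x i0 i0.
Definition t01 (x : T2 R) := val x i0 i1.
Definition t11 (x : T2 R) := val x i1 i1.

Lemma t10 (x : T2 R) : val x i1 i0 = 0.
Proof. by have := valP x; rewrite unfold_in /uptri => /eqP. Qed.

Lemma tmul (x y : T2 R) :
  [/\ t00 (x * y) = t00 x * t00 y, t01 (x * y) = t00 x * t01 y + t01 x * t11 y
    & t11 (x * y) = t11 x * t11 y].
Proof.
rewrite /t00 /t01 /t11; change (val (x * y)) with (val x * val y).
by rewrite !mul2E !t10 !mul0r !mulr0 !addr0 !add0r.
Qed.

Lemma teq (x y : T2 R) : t00 x = t00 y -> t01 x = t01 y -> t11 x = t11 y -> x = y.
Proof. by move=> *; apply: val_inj; apply: mx2_eq => //; rewrite !t10. Qed.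

Lemma tsub (x y : T2 R) :
  [/\ t00 (x - y) = t00 x - t00 y, t01 (x - y) = t01 x - t01 y
    & t11 (x - y) = t11 x - t11 y].
Proof. by rewrite /t00 /t01 /t11; change (val (x - y)) with (val x - val y); rewrite !mxE. Qed.

Lemma tadd (x y : T2 R) :
  [/\ t00 (x + y) = t00 x + t00 y, t01 (x + y) = t01 x + t01 y
    & t11 (x + y) = t11 x + t11 y].
Proof. by rewrite /t00 /t01 /t11; change (val (x + y)) with (val x + val y); rewrite !mxE. Qed.

Lemma t1 : [/\ t00 (1 : T2 R) = 1, t01 (1 : T2 R) = 0 & t11 (1 : T2 R) = 1].
Proof. by rewrite /t00 /t01 /t11; change (val (1 : T2 R)) with (1 : 'M[R]_2); rewrite !mxE. Qed.

Lemma t0 : [/\ t00 (0 : T2 R) = 0, t01 (0 : T2 R) = 0 & t11 (0 : T2 R) = 0].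
Proof. by rewrite /t00 /t01 /t11; change (val (0 : T2 R)) with (0 : 'M[R]_2); rewrite !mxE. Qed.

Definition M2u (a b c : R) : 'M[R]_2 :=
  \matrix_(i, j) if (i : nat) == 0%N then (if (j : nat) == 0%N then a else b)
                 else (if (j : nat) == 0%N then 0 else c).

Lemma M2u_in a b c : M2u a b c \in @uptri R.
Proof. by rewrite unfold_in /uptri /= mxE. Qed.

Definition mkT2 a b c : T2 R := exist _ (M2u a b c) (M2u_in a b c).

Lemma tmk a b c : [/\ t00 (mkT2 a b c) = a, t01 (mkT2 a b c) = b & t11 (mkT2 a b c) = c].
Proof. by rewrite /t00 /t01 /t11 /= !mxE. Qed.

Lemma tunit (x : T2 R) u w : t00 x * u = 1 -> u * t00 x = 1 ->
  t11 x * w = 1 -> w * t11 x = 1 -> is_unit x.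
Proof.
move=> H1 H2 H3 H4; exists (mkT2 u (- (u * t01 x * w)) w).
have [m0 m1 m2] := tmk u (- (u * t01 x * w)) w.
have [o0 o1 o2] := t1.
split; apply: teq; have [p0 p1 p2] := tmul x (mkT2 u (- (u * t01 x * w)) w);
  have [r0 r1 r2] := tmul (mkT2 u (- (u * t01 x * w)) w) x;
  rewrite ?p0 ?p1 ?p2 ?r0 ?r1 ?r2 ?m0 ?m1 ?m2 ?o0 ?o1 ?o2 //.
- by rewrite !mulrN !mulrA H1 mul1r addNr.
- by rewrite mulNr -!mulrA H4 mulr1 addrN.
Qed.

Lemma tunit_diag (x : T2 R) : is_unit x -> (1 : R) != 0 -> t00 x != 0 /\ t11 x != 0.
Proof.
move=> [g [H _]] nz; have [p0 _ p2] := tmul x g; have [o0 _ o2] := t1.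
split; apply: contraNneq nz => E.
- by rewrite -o0 -H p0 E mul0r.
- by rewrite -o2 -H p2 E mul0r.
Qed.

Lemma texp (x : T2 R) n : t00 (x ^+ n) = t00 x ^+ n /\ t11 (x ^+ n) = t11 x ^+ n.
Proof.
elim: n => [|n [IH1 IH2]]; first by rewrite !expr0; have [o0 _ o2] := t1.
by rewrite !exprS; have [p0 _ p2] := tmul x (x ^+ n); rewrite p0 p2 IH1 IH2.
Qed.


Lemma dom_idem (c : R) : domain R -> c * c = c -> c = 0 \/ c = 1.
Proof.
move=> [_ Hd] H; have : c * (c - 1) = 0 by rewrite mulrBr mulr1 H subrr.
move/Hd => [->|]; [by left | by move/eqP; rewrite subr_eq0 => /eqP ->; right].
Qed.

Lemma dom_nilp (c : R) n : domain R -> c ^+ n = 0 -> c = 0.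
Proof.
move=> [nz Hd]; elim: n => [|n IH]; first by rewrite expr0 => /nz.
by rewrite exprS => /Hd [//|/IH].
Qed.

Lemma T2_usc (a : T2 R) : domain R -> (t00 a = 0 \/ t00 a = 1) ->
  (t11 a = 0 \/ t11 a = 1) -> uniquely_strongly_clean a.
Proof.
move=> HD Hx Hz; have [nz Hdom] := HD.
have nz' : (1 : R) != 0 by apply/eqP.
have F : forall f : T2 R, is_idem f /\ is_unit (a - f) /\ a * f = f * a ->
  [/\ t00 f = 0 \/ t00 f = 1, t11 f = 0 \/ t11 f = 1, t00 a - t00 f != 0,
      t11 a - t11 f != 0 &
      (t00 f * t01 f + t01 f * t11 f = t01 f /\
      t00 a * t01 f + t01 a * t11 f = t00 f * t01 a + t01 f * t11 a)].
  move=> f [Hf [U C]]; rewrite /is_idem in Hf.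
  have [p0 p1 p2] := tmul f f; rewrite Hf in p0 p1 p2.
  have [s0 _ s2] := tsub a f.
  have [d0 d2] := tunit_diag U nz'; rewrite s0 s2 in d0 d2.
  have [c0 c1 c2] := tmul a f; have [e0 e1 e2] := tmul f a.
  split => //.
  - by apply: dom_idem.
  - by apply: dom_idem.
  - by split => //; rewrite -c1 -e1 C.
have [m0 m1 m2] := t0; have [o0 o1 o2] := t1.
have subE := tsub; have mkE := tmk; have mulE := tmul.
case: Hx => Hx; case: Hz => Hz.
-
  exists 1; split.
    split; first by rewrite /is_idem mulr1.
    split; last by rewrite mulr1 mul1r.
    have [s0 _ s2] := tsub a 1.
    apply: (@tunit _ (-1) (-1)); rewrite ?s0 ?s2 ?Hx ?Hz ?o0 ?o2 sub0r mulrNN mulr1 //.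
  move=> f /F [hu hw dx dz [i1 c1]]; rewrite Hx Hz in dx dz c1.
  case: hu => hu; first by rewrite hu subrr eqxx in dx.
  case: hw => hw; first by rewrite hw subrr eqxx in dz.
  rewrite hu hw mul1r mulr1 in i1.
  apply: teq; rewrite ?o0 ?o1 ?o2 ?hu ?hw //.
  by apply/esym; apply: (addrI (t01 f)); rewrite addr0.
-
  exists (mkT2 1 (- t01 a) 0); have [k0 k1 k2] := mkE 1 (- t01 a) 0.
  split.
    split; [|split].
    + apply: teq; have [p0 p1 p2] := mulE (mkT2 1 (- t01 a) 0) (mkT2 1 (- t01 a) 0);
      rewrite ?p0 ?p1 ?p2 ?k0 ?k1 ?k2 ?(mulr0, mul0r, mulr1, mul1r, addr0) //.
    + have [s0 _ s2] := subE a (mkT2 1 (- t01 a) 0).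
      apply: (@tunit _ (-1) 1); rewrite ?s0 ?s2 ?Hx ?Hz ?k0 ?k2 ?sub0r ?subr0 ?mulrNN ?mulr1 ?mul1r //.
    + apply: teq; have [p0 p1 p2] := mulE a (mkT2 1 (- t01 a) 0);
      have [r0 r1 r2] := mulE (mkT2 1 (- t01 a) 0) a;
      rewrite ?p0 ?p1 ?p2 ?r0 ?r1 ?r2 ?k0 ?k1 ?k2 ?Hx ?Hz ?(mulr0, mul0r, mulr1, mul1r, addr0) //.
      by rewrite ?subrr ?addNr ?addrN.
  move=> f /F [hu hw dx dz [i1 c1]]; rewrite Hx Hz in dx dz c1.
  case: hu => hu; first by rewrite hu subrr eqxx in dx.
  case: hw => hw; last by rewrite hw subrr eqxx in dz.
  rewrite hu hw !(mul0r, mulr0, mul1r, mulr1, add0r) in c1.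
  apply: teq; rewrite ?k0 ?k1 ?k2 ?hu ?hw //.
  by apply/eqP; rewrite eq_sym -addr_eq0 addrC -c1.
-
  exists (mkT2 0 (- t01 a) 1); have [k0 k1 k2] := mkE 0 (- t01 a) 1.
  split.
    split; [|split].
    + apply: teq; have [p0 p1 p2] := mulE (mkT2 0 (- t01 a) 1) (mkT2 0 (- t01 a) 1);
      rewrite ?p0 ?p1 ?p2 ?k0 ?k1 ?k2 ?(mulr0, mul0r, mulr1, mul1r, add0r) //.
    + have [s0 _ s2] := subE a (mkT2 0 (- t01 a) 1).
      apply: (@tunit _ 1 (-1)); rewrite ?s0 ?s2 ?Hx ?Hz ?k0 ?k2 ?sub0r ?subr0 ?mulrNN ?mulr1 ?mul1r //.
    + apply: teq; have [p0 p1 p2] := mulE a (mkT2 0 (- t01 a) 1);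
      have [r0 r1 r2] := mulE (mkT2 0 (- t01 a) 1) a;
      rewrite ?p0 ?p1 ?p2 ?r0 ?r1 ?r2 ?k0 ?k1 ?k2 ?Hx ?Hz ?(mulr0, mul0r, mulr1, mul1r, addr0, add0r) //.
      by rewrite ?subrr ?addNr ?addrN ?mulN1r.
  move=> f /F [hu hw dx dz [i1 c1]]; rewrite Hx Hz in dx dz c1.
  case: hu => hu; last by rewrite hu subrr eqxx in dx.
  case: hw => hw; first by rewrite hw subrr eqxx in dz.
  rewrite hu hw !(mul0r, mulr0, mul1r, mulr1, add0r, addr0) in c1.
  apply: teq; rewrite ?k0 ?k1 ?k2 ?hu ?hw //.
  by apply/eqP; rewrite eq_sym -addr_eq0 c1.
-
  exists 0; split.
    split; first by rewrite /is_idem mulr0.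
    split; last by rewrite mulr0 mul0r.
    rewrite subr0; apply: (@tunit _ 1 1); rewrite ?Hx ?Hz mulr1 //.
  move=> f /F [hu hw dx dz [i1 c1]]; rewrite Hx Hz in dx dz c1.
  case: hu => hu; last by rewrite hu subrr eqxx in dx.
  case: hw => hw; last by rewrite hw subrr eqxx in dz.
  rewrite hu hw mul0r mulr0 add0r in i1.
  by apply: teq; rewrite ?m0 ?m1 ?m2 ?hu ?hw.
Qed.

Lemma T2_NCSUC : domain R -> NCSUC (T2 R).
Proof.
move=> HD a [e [q [He [[n Hq] ->]]]]; apply: T2_usc => //.
- have [q0 q2] := texp q n; rewrite Hq in q0 q2.
  have [m0 _ m2] := t0; rewrite m0 in q0.
  have Q0 := dom_nilp HD (esym q0).
  have [a0 _ _] := tadd e q; rewrite a0 Q0 addr0.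
  rewrite /is_idem in He; have [p0 _ _] := tmul e e; rewrite He in p0.
  exact: dom_idem HD (esym p0).
- have [q0 q2] := texp q n; rewrite Hq in q0 q2.
  have [m0 _ m2] := t0; rewrite m2 in q2.
  have Q2 := dom_nilp HD (esym q2).
  have [_ _ a2] := tadd e q; rewrite a2 Q2 addr0.
  rewrite /is_idem in He; have [_ _ p2] := tmul e e; rewrite He in p2.
  exact: dom_idem HD (esym p2).
Qed.

Definition M2 (a b c d : R) : 'M[R]_2 :=
  \matrix_(i, j) if (i : nat) == 0%N then (if (j : nat) == 0%N then a else b)
                 else (if (j : nat) == 0%N then c else d).

Lemma M2E a b c d :
  [/\ M2 a b c d i0 i0 = a, M2 a b c d i0 i1 = b, M2 a b c d i1 i0 = c
    & M2 a b c d i1 i1 = d].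
Proof. by rewrite !mxE. Qed.

Lemma M2_mul a b c d a' b' c' d' :
  M2 a b c d * M2 a' b' c' d' =
  M2 (a * a' + b * c') (a * b' + b * d') (c * a' + d * c') (c * b' + d * d').
Proof. by apply: mx2_eq; rewrite mul2E !mxE. Qed.

Lemma M2_1 : (1 : 'M[R]_2) = M2 1 0 0 1.
Proof. by apply: mx2_eq; rewrite !mxE. Qed.

Lemma M2_0 : (0 : 'M[R]_2) = M2 0 0 0 0.
Proof. by apply: mx2_eq; rewrite !mxE. Qed.

Lemma M2_sub a b c d a' b' c' d' :
  M2 a b c d - M2 a' b' c' d' = M2 (a - a') (b - b') (c - c') (d - d').
Proof. by apply: mx2_eq; rewrite !mxE. Qed.

Lemma M2_not_NCSUC : ~ NCSUC 'M[R]_2.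
Proof.
move=> H.
pose a := M2 1 1 1 0.
have Hnc : nil_clean a.
  exists (M2 1 0 1 0), (M2 0 1 0 0); split; last split.
  - by rewrite /is_idem M2_mul !(mulr0, mul0r, mulr1, addr0, add0r).
  - exists 2%N; rewrite expr2 M2_mul M2_0; congr M2; rewrite !(mulr0, mul0r, mulr1, addr0, add0r) //.
  - by apply: mx2_eq; rewrite !mxE !(addr0, add0r).
have E1 : a * (a - 1) = 1.
  by rewrite /a M2_1 M2_sub M2_mul !(mulr0, mul0r, mulr1, addr0, add0r, subr0, sub0r, subrr) mul1r addrN.
have E2 : (a - 1) * a = 1.
  by rewrite /a M2_1 M2_sub M2_mul !(mulr0, mul0r, mulr1, mul1r, addr0, add0r, subr0, sub0r, subrr).

have [f [_ Hf]] := H a Hnc.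
have Ef0 := Hf 0; have Ef1 := Hf 1.
have : (0 : 'M[R]_2) = 1.
  rewrite -Ef0 ?Ef1 //.
  - split; first by rewrite /is_idem mulr1.
    split; last by rewrite mulr1 mul1r.
    by exists a; split.
  - split; first by rewrite /is_idem mulr0.
    split; last by rewrite mulr0 mul0r.
    by rewrite subr0; exists (a - 1); split.
move/(congr1 (fun A : 'M[R]_2 => A i0 i0)); rewrite !mxE /=.
by move/eqP; rewrite eq_sym oner_eq0.
Qed.

End Mat.

Theorem mainTheorem19 :
  [/\ (forall R : pzRingType, reduced R -> NCSUC R),
      (forall R : pzRingType, local_ring R -> NCSUC R),
      (forall R : nzRingType, domain R -> NCSUC (T2 R))
    & (forall R : nzRingType, ~ NCSUC 'M[R]_2)].
Proof.
split.
- exact: reduced_NCSUC.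
- exact: local_NCSUC.
- exact: T2_NCSUC.
- exact: M2_not_NCSUC.
Qed.
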